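(* Let $f$ be a Hamiltonian stationary torus. The real structure $\rho:\mathrm{Spec}\to\mathrm{Spec}$, $\rho(h)=\bar h$, induces the involutions $\rho:\mathbb C^2\to\mathbb C^2$, $(A,B)\mapsto(A,-B)$, and $\rho:\Gamma^*\to\Gamma^*$, $\delta\mapsto-\delta$ (i.e. $\overline{h^{A,B}}=h^{A,-B}$), so that $\rho(\Gamma^*_{A,B})=\Gamma^*_{A,-B}$, and the lines $\mathcal L$ are compatible with $\rho$, that is $$\rho^*\mathcal L_{A,\delta-B}:=\mathcal L_{A,-(\delta-B)}=\mathcal L_{A,\delta-B}\,j$$ for all $\delta\in\Gamma^*_{A,B}$.
   Context: Identify $\mathbb R^4$ with $\mathbb H$ and $\mathbb C$ with $\mathrm{span}_{\mathbb R}\{1,i\}$; $\langle\cdot,\cdot\rangle$ is the Euclidean inner product on $\mathbb C\cong\mathbb R^2$. $\Gamma\subset\mathbb C$ a lattice, $\Gamma^*$ its dual lattice. A Hamiltonian stationary torus is a $\Gamma$-periodic conformal immersion $f:\mathbb C\to\mathbb H$ with $df=e^{j\beta/2}dz\,g$, $dz=dx+i\,dy$, $g$ nowhere zero, $\beta(z)=2\pi\langle\beta_0,z\rangle$ with $0\ne\beta_0\in\Gamma^*$. Convention $*dz=i\,dz$; left normal $N=e^{j\beta}i$. $\alpha:\mathbb C\to\mathbb H$ is holomorphic if $*d\alpha=N\,d\alpha$; for a homomorphism $h:\Gamma\to\mathbb C_*$, $H^0_h$ denotes holomorphic $\alpha$ with $\alpha(z+\gamma)=\alpha(z)h(\gamma)$;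 $\mathrm{Spec}=\{h:H^0_h\ne0\}$. $h^{A,B}(\gamma)=e^{2\pi(\langle A,\gamma\rangle-i\langle B,\gamma\rangle)}$; $\Gamma^*_{A,B}=\{\delta\in\Gamma^*+\frac{\beta_0}2:|\delta-B|^2-|A|^2=\frac{|\beta_0|^2}4,\ \langle\delta-B,A\rangle=0\}$; $e_\delta(z)=e^{2\pi i\langle\delta,z\rangle}$; $\lambda_{A,\delta-B}=\frac2{\beta_0}(\delta-iA-B)$. For $\delta\in\Gamma^*_{A,B}$, $\mathcal L_{A,\delta-B}$ is the complex line (right $\mathbb C$-span) in $H^0_{h^{A,B}}$ spanned by the monochromatic holomorphic section $\alpha^{A,B}_\delta=e^{j\beta/2}(1-k\lambda_{A,\delta-B})e_{\delta-B}e^{2\pi\langle A,\cdot\rangle}$. *)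

(* Defs.v *)
From Stdlib Require Import Reals ZArith.
From Coquelicot Require Export Coquelicot.
Open Scope R_scope.

Record quat := Quat { qr : R; qi : R; qj : R; qk : R }.

Definition qadd (p q : quat) : quat :=
  Quat (qr p + qr q) (qi p + qi q) (qj p + qj q) (qk p + qk q).
Definition qopp (p : quat) : quat := Quat (- qr p) (- qi p) (- qj p) (- qk p).
Definition qsub (p q : quat) : quat := qadd p (qopp q).
(* Hamilton product: ij = k, jk = i, ki = j *)
Definition qmul (p q : quat) : quat :=
  Quat (qr p * qr q - qi p * qi q - qj p * qj q - qk p * qk q)
       (qr p * qi q + qi p * qr q + qj p * qk q - qk p * qj q)
       (qr p * qj q - qi p * qk q + qj p * qr q + qk p * qi q)
       (qr p * qk q + qi p * qj q - qj p * qi q + qk p * qr q).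

Definition qzero : quat := Quat 0 0 0 0.
Definition qone  : quat := Quat 1 0 0 0.
Definition qI    : quat := Quat 0 1 0 0.
Definition qJ    : quat := Quat 0 0 1 0.
Definition qK    : quat := Quat 0 0 0 1.

Definition C2H (z : C) : quat := Quat (Re z) (Im z) 0 0.

Definition qexpj (t : R) : quat := Quat (cos t) 0 (sin t) 0.

Definition inner (a b : C) : R := Re a * Re b + Im a * Im b.

Definition cexp (z : C) : C :=
  (exp (Re z) * cos (Im z), exp (Re z) * sin (Im z)).

Definition lattice (w1 w2 : C) (g : C) : Prop :=
  exists m n : Z, g = (RtoC (IZR m) * w1 + RtoC (IZR n) * w2)%C.

Definition lattice_basis (w1 w2 : C) : Prop := Im (Cconj w1 * w2)%C <> 0.

Definition dual_lattice (w1 w2 : C) (d : C) : Prop :=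
  forall g, lattice w1 w2 g -> exists n : Z, inner d g = IZR n.

Definition qderive (F : R -> quat) (x : R) (v : quat) : Prop :=
  is_derive (fun t => qr (F t)) x (qr v) /\ is_derive (fun t => qi (F t)) x (qi v) /\
  is_derive (fun t => qj (F t)) x (qj v) /\ is_derive (fun t => qk (F t)) x (qk v).

Definition qcontinuous (G : C -> quat) (z : C) : Prop :=
  continuous (fun w => qr (G w)) z /\ continuous (fun w => qi (G w)) z /\
  continuous (fun w => qj (G w)) z /\ continuous (fun w => qk (G w)) z.

Definition beta (b0 z : C) : R := 2 * PI * inner b0 z.

(* f : C -> H is a Gamma-periodic map with df = e^{j beta/2} dz g,
   dz = dx + i dy, g (continuous and) nowhere zero; i.e.
   d_x f = e^{j beta/2} g and d_y f = e^{j beta/2} i g. *)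
Definition ham_stat_torus (w1 w2 b0 : C) (f : C -> quat) : Prop :=
  lattice_basis w1 w2 /\
  dual_lattice w1 w2 b0 /\ b0 <> RtoC 0 /\
  (forall z g, lattice w1 w2 g -> f (z + g)%C = f z) /\
  exists g : C -> quat,
    (forall z, g z <> qzero) /\ (forall z, qcontinuous g z) /\
    (forall x y : R,
        qderive (fun t => f (t, y)) x (qmul (qexpj (beta b0 (x, y) / 2)) (g (x, y))) /\
        qderive (fun t => f (x, t)) y
                (qmul (qexpj (beta b0 (x, y) / 2)) (qmul qI (g (x, y))))).

Definition hAB (A B : C) (g : C) : C :=
  cexp (RtoC (2 * PI * inner A g) - Ci * RtoC (2 * PI * inner B g))%C.

Definition GammaStarAB (w1 w2 b0 A B : C) (d : C) : Prop :=
  dual_lattice w1 w2 (d - b0 / 2)%C /\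
  (Cmod (d - B)%C) ^ 2 - (Cmod A) ^ 2 = (Cmod b0) ^ 2 / 4 /\
  inner (d - B)%C A = 0.

Definition edelta (d z : C) : C := cexp (Ci * RtoC (2 * PI * inner d z))%C.

Definition lam (b0 A u : C) : C := (RtoC 2 / b0 * (u - Ci * A))%C.

(* the monochromatic section, indexed by (A, u) with u = delta - B:
   alpha^{A,B}_delta = e^{j beta/2} (1 - k lambda_{A,delta-B}) e_{delta-B} e^{2 pi <A,.>} *)
Definition alpha (b0 A u : C) (z : C) : quat :=
  qmul (qexpj (beta b0 z / 2))
    (qmul (qsub qone (qmul qK (C2H (lam b0 A u))))
          (C2H (edelta u z * RtoC (exp (2 * PI * inner A z)))%C)).

(* L_{A,u}: the complex line (right C-span) spanned by alpha *)
Definition Lline (b0 A u : C) (F : C -> quat) : Prop :=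
  exists c : C, forall z, F z = qmul (alpha b0 A u z) (C2H c).

Definition Lline_j (b0 A u : C) (F : C -> quat) : Prop :=
  exists G, Lline b0 A u G /\ F = (fun z => qmul (G z) qJ).

(* Main.v *)
Require Import Defs.
From Stdlib Require Import Reals ZArith Lra Psatz FunctionalExtensionality.
From Coquelicot Require Import Coquelicot.
Open Scope R_scope.

Lemma key (l1 l2 : C) (H: (l1 * Cconj l2 = - RtoC 1)%C) :
  qmul (qsub qone (qmul qK (C2H l1))) qJ =
  qmul (qsub qone (qmul qK (C2H l2))) (C2H (Ci * Cconj l1)%C).
Proof.
  destruct l1 as [a b], l2 as [p q].
  unfold Cmult, Cconj, Copp, RtoC in H; simpl in H. injection H; intros H2 H1.
  unfold qmul, qsub, qadd, qopp, qone, qK, qJ, C2H, Ci, Cmult, Cconj; simpl.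
  f_equal; nra.
Qed.

Lemma lam_prod (b0 A u : C) : b0 <> RtoC 0 ->
  (Cmod u)^2 - (Cmod A)^2 = (Cmod b0)^2/4 -> inner u A = 0 ->
  (lam b0 A u * Cconj (lam b0 A (- u)) = - RtoC 1)%C.
Proof.
  intros Hb H1 H2.
  destruct b0 as [b1 b2], A as [a1 a2], u as [u1 u2].
  unfold Cmod in H1. rewrite !pow2_sqrt in H1 by (simpl; nra). simpl in H1.
  unfold inner in H2; simpl in H2.
  assert (H1' : u1^2+u2^2-(a1^2+a2^2) = (b1^2+b2^2)/4) by (simpl; lra).
  clear H1; rename H1' into H1.
  assert (Hd : b1^2 + b2^2 <> 0).
  { intro Hc. apply Hb. assert (b1 = 0) by nra. assert (b2 = 0) by nra. subst. reflexivity. }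
  unfold lam, Cdiv, Cmult, Cinv, Cconj, Cminus, Cplus, Copp, RtoC, Ci; simpl.
  f_equal; field_simplify; try (let Hc := fresh in intro Hc; apply Hd; nra).
  - match goal with |- ?n / ?d = _ => replace n with (-d) end.
    + field. nra.
    + transitivity (-4*(b1^2+b2^2)*((u1^2+u2^2)-(a1^2+a2^2))). 2: ring.
      rewrite H1. field.
  - match goal with |- ?n / ?d = _ => replace n with 0 end.
    + field. nra.
    + transitivity (8*(b1^2+b2^2)*(u1*a1+u2*a2)). 2: ring.
      rewrite H2. ring.
Qed.

Lemma qmul_assoc p q r : qmul p (qmul q r) = qmul (qmul p q) r.
Proof. destruct p, q, r; unfold qmul; simpl; f_equal; ring. Qed.

Lemma C2H_comm a b : qmul (C2H a) (C2H b) = qmul (C2H b) (C2H a).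
Proof. destruct a, b; unfold qmul, C2H; simpl; f_equal; ring. Qed.

Lemma C2H_mul a b : qmul (C2H a) (C2H b) = C2H (a * b)%C.
Proof. destruct a, b; unfold qmul, C2H, Cmult; simpl; f_equal; ring. Qed.

Lemma C2H_J w : qmul (C2H w) qJ = qmul qJ (C2H (Cconj w)).
Proof. destruct w; unfold qmul, C2H, qJ, Cconj; simpl; f_equal; ring. Qed.

Lemma E_conj0 t r :
  Cconj (cexp (Ci * RtoC t) * RtoC r)%C = (cexp (Ci * RtoC (- t)) * RtoC r)%C.
Proof.
  unfold cexp, Cconj, Cmult, Ci, RtoC; simpl.
  replace (0 * t - 1 * 0) with 0 by ring. replace (0 * - t - 1 * 0) with 0 by ring.
  replace (0 * 0 + 1 * t) with t by ring. replace (0 * 0 + 1 * - t) with (- t) by ring.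
  rewrite cos_neg, sin_neg. f_equal; ring.
Qed.

Lemma E_conj u A z :
  Cconj (edelta u z * RtoC (exp (2 * PI * inner A z)))%C =
  (edelta (- u) z * RtoC (exp (2 * PI * inner A z)))%C.
Proof.
  unfold edelta. rewrite E_conj0. do 3 f_equal.
  destruct u, z; unfold inner, Copp; simpl. f_equal; ring.
Qed.

Lemma alpha_j b0 A u z :
  (lam b0 A u * Cconj (lam b0 A (- u)) = - RtoC 1)%C ->
  qmul (alpha b0 A u z) qJ =
  qmul (alpha b0 A (- u) z) (C2H (Ci * Cconj (lam b0 A u))%C).
Proof.
  intro H. unfold alpha.
  rewrite <- E_conj.
  rewrite <- !qmul_assoc. rewrite C2H_J.
  rewrite (qmul_assoc (qsub qone _) qJ). rewrite key with (l2 := lam b0 A (- u)) by exact H.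
  rewrite <- qmul_assoc. rewrite (C2H_comm (Ci * _)%C). reflexivity.
Qed.

Lemma qJ_shift Q a : qmul (qmul Q (C2H a)) qJ = qmul (qmul Q qJ) (C2H (Cconj a)).
Proof. rewrite <- !qmul_assoc, C2H_J. reflexivity. Qed.

Lemma dual_sub w1 w2 x y : dual_lattice w1 w2 x -> dual_lattice w1 w2 y ->
  dual_lattice w1 w2 (- x - y)%C.
Proof.
  intros Hx Hy g Hg. destruct (Hx g Hg) as [m Hm], (Hy g Hg) as [n Hn].
  exists (- m - n)%Z. rewrite minus_IZR, opp_IZR, <- Hm, <- Hn.
  destruct x, y, g; unfold inner; simpl; ring.
Qed.

Lemma dual_ext w1 w2 x y : x = y -> dual_lattice w1 w2 x -> dual_lattice w1 w2 y.
Proof. intros ->; auto. Qed.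

Lemma gstar_neg w1 w2 b0 A B d : dual_lattice w1 w2 b0 ->
  GammaStarAB w1 w2 b0 A B d -> GammaStarAB w1 w2 b0 A (- B)%C (- d)%C.
Proof.
  intros Hb [H1 [H2 H3]]. split; [|split].
  - eapply dual_ext; [|apply (dual_sub _ _ _ _ H1 Hb)].
    destruct d, b0; unfold Cminus, Cplus, Copp, Cdiv, Cmult, Cinv; simpl; f_equal; field.
  - replace (Cmod (- d - - B)) with (Cmod (d - B)); [exact H2|]. destruct d, B; unfold Cmod, Cminus, Cplus, Copp; simpl. f_equal; ring.
  - destruct d, B, A; unfold inner, Cminus, Cplus, Copp in *; simpl in *. nra.
Qed.

Theorem theorem2p11 (w1 w2 b0 : C) (f : C -> quat)
  (Hf : ham_stat_torus w1 w2 b0 f) (A B : C) :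
  (forall g, lattice w1 w2 g -> Cconj (hAB A B g) = hAB A (- B)%C g) /\
  (forall d, GammaStarAB w1 w2 b0 A (- B)%C d <->
             exists d', GammaStarAB w1 w2 b0 A B d' /\ d = (- d')%C) /\
  (forall d, GammaStarAB w1 w2 b0 A B d ->
     forall F, Lline b0 A (- (d - B))%C F <-> Lline_j b0 A (d - B)%C F).
Proof.
  destruct Hf as [_ [Hb0 [Hnz _]]].
  split; [|split].
  - intros g _. unfold hAB, cexp, Cconj, Cminus, Cplus, Copp, Cmult, Ci, RtoC. simpl.
    destruct A, B, g; unfold inner; simpl.
    set (t := 2 * PI * (r1 * r3 + r2 * r4)).
    replace (2 * PI * (- r1 * r3 + - r2 * r4)) with (- t) by (unfold t; ring).
    replace (2 * PI * (r * r3 + r0 * r4) + - (0 * t - 1 * 0)) with (2 * PI * (r * r3 + r0 * r4)) by ring.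
    replace (2 * PI * (r * r3 + r0 * r4) + - (0 * - t - 1 * 0)) with (2 * PI * (r * r3 + r0 * r4)) by ring.
    replace (0 + - (0 * 0 + 1 * t)) with (- t) by ring.
    replace (0 + - (0 * 0 + 1 * - t)) with t by ring.
    rewrite cos_neg, sin_neg. f_equal; ring.
  - intro d. split.
    + intro H. exists (- d)%C. split.
      * pose proof (gstar_neg _ _ _ _ _ _ Hb0 H) as H'.
        replace B with (- - B)%C. exact H'. destruct B; unfold Copp; simpl; f_equal; ring.
      * destruct d; unfold Copp; simpl; f_equal; ring.
    + intros [d' [H ->]]. exact (gstar_neg _ _ _ _ _ _ Hb0 H).
  - intros d [_ [H2 H3]] F.
    assert (Hp : (lam b0 A (d - B) * Cconj (lam b0 A (- (d - B))) = - RtoC 1)%C).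
    { apply lam_prod; auto. }
    set (u := (d - B)%C) in *.
    set (c := (Ci * Cconj (lam b0 A u))%C).
    assert (Hc : c <> RtoC 0).
    { unfold c. destruct (lam b0 A u) as [l1 l2]. destruct (lam b0 A (- u)) as [p q].
      unfold Cmult, Cconj, Ci, RtoC, Copp in *; simpl in *. injection Hp; intros.
      intro E; injection E; intros. nra. }
    split.
    + intros [c0 Hc0]. exists (fun z => qmul (alpha b0 A u z) (C2H (Cconj (c0 / c))%C)).
      split. { exists (Cconj (c0 / c))%C. intro; reflexivity. }
      extensionality z. rewrite Hc0, qJ_shift, alpha_j by exact Hp.
      rewrite <- qmul_assoc, C2H_mul. fold c. replace (c * Cconj (Cconj (c0 / c)))%C with c0; [reflexivity|].
      clearbody c. destruct c as [x y], c0 as [a b].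
      assert (Hxy : x^2 + y^2 <> 0).
      { intro E. apply Hc. unfold RtoC. f_equal; nra. }
      unfold Cconj, Cdiv, Cmult, Cinv; simpl. f_equal; field; intro E; apply Hxy; nra.
    + intros [G [HG HF]]. destruct HG as [c1 Hc1]. subst F. exists (c * Cconj c1)%C. intro z.
      rewrite Hc1, qJ_shift, alpha_j by exact Hp. rewrite <- qmul_assoc, C2H_mul. reflexivity.
Qed.
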